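(* Let $P$ be a recursively labelled forest poset on $\{1,2,\ldots,n\}$, and for each $i$ let $h_i:=|P_{\geq i}|$ and $\min(P_{\geq i})$ be the smallest integer in $P_{\geq i}$. Then, in $\mathbb{Q}(x_1,x_2,\ldots)$, $$L(P):=\sum_{w \in \mathcal{L}(P)} \mathrm{wt}(w) = \frac{[n]!}{\prod_{i=1}^n F^{\min(P_{\geq i})-1}[h_i]}.$$
   Context: Work in the field $\mathbb{Q}(x_1,x_2,\ldots)$ of rational functions in countably many indeterminates, and let $F$ be the field endomorphism (''Frobenius map'') with $F(x_i)=x_{i+1}$ for all $i$. Define $[n]:=x_1+x_2+\cdots+x_n$ (so $F^{j}[n]=x_{j+1}+\cdots+x_{j+n}$), $[0]!:=1$ and $[n]!:=[n]\cdot F([n-1]!)=\prod_{j=0}^{n-1}F^j[n-j]$. For a $k$-element set $S=\{i_1>i_2>\cdots>i_k\}$ of positive integers define $\mathrm{wt}(S):=\frac{\prod_{j=1}^k F^{i_j-1}[j]}{[k]!}$ (with $\mathrm{wt}(\emptyset)=1$). For a permutation $w=(w_1,\ldots,w_n)$ of $\{1,\ldots,n\}$ in one-line notation define $\mathrm{wt}(w)$ recursively: the empty permutation ($n=0$) has weight $1$; otherwise let $k:=w_1-1$, let $S(w):=\{i: w_i\le k\}$, let $a$ be the permutation of $\{1,\ldots,k\}$ obtained by listing the values $w_i\le k$ in order of increasing $i$, and let $\hat b$ be the permutation of $\{1,\ldots,n-k-1\}$ obtained by listing the values $w_i-k-1$ for those $i$ with $w_i>k+1$, in order of increasing $i$;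 then $\mathrm{wt}(w):=\mathrm{wt}(S(w))\cdot \mathrm{wt}(a)\cdot F^{k+1}(\mathrm{wt}(\hat b))$. A forest poset on $\{1,\ldots,n\}$ is a partial order $<_P$ in which every element covers at most one other element; $P_{\geq i}:=\{j: j\geq_P i\}$ is the subtree rooted at $i$. $P$ is recursively labelled if each $P_{\geq i}$ is an interval of consecutive integers. $\mathcal{L}(P)$ is the set of linear extensions of $P$: permutations $w$ such that $i<_P j$ implies $i$ appears before $j$ in the word $w_1w_2\cdots w_n$. *)

(* Defs.v *)
From mathcomp Require Import all_boot all_order all_algebra.
From mathcomp Require Import mpoly.
Set Implicit Arguments. Unset Strict Implicit. Unset Printing Implicit Defensive.
Import GRing.Theory.
Local Open Scope ring_scope.

(* The field Q(x_1,x_2,...) is modelled by any field K containing a family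
   x : nat -> K of elements that are algebraically independent over the prime
   ring (which forces characteristic 0), together with a ring endomorphism F
   of K with F (x i) = x (i+1).  Only x_1, x_2, ... (i >= 1) are used. *)

Definition alg_indep (K : fieldType) (x : nat -> K) : Prop :=
  forall (m : nat) (p : {mpoly int[m]}),
    p != 0 -> mmap intr (fun i : 'I_m => x i) p != 0.

Section Weights.
Variables (K : fieldType) (x : nat -> K) (F : K -> K).

Definition brk (n : nat) : K := \sum_(1 <= i < n.+1) x i.

Definition brkfact (n : nat) : K := \prod_(j < n) iter j F (brk (n - j)).

(* wt(S) for a finite set S of positive integers, given as a (duplicate-free)
   list; it is sorted decreasingly i_1 > i_2 > ... > i_k. *)
Definition wt_set (S : seq nat) : K :=
  let s := sort geq S in
  (\prod_(j < size s) iter (nth 0%N s j).-1 F (brk j.+1)) / brkfact (size s).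

(* one step of the recursive weight of a permutation w (one-line notation,
   values in 1..n), with fuel *)
Fixpoint wt_perm_fuel (fuel : nat) (w : seq nat) : K :=
  match fuel with
  | 0 => 1
  | fuel'.+1 =>
    match w with
    | [::] => 1
    | w1 :: _ =>
      let k := w1.-1 in
      let S := [seq i.+1 | i <- iota 0 (size w) & (nth 0%N w i <= k)%N] in
      let a := [seq v <- w | (v <= k)%N] in
      let bh := [seq (v - k.+1)%N | v <- w & (k.+1 < v)%N] in
      wt_set S * wt_perm_fuel fuel' a * iter k.+1 F (wt_perm_fuel fuel' bh)
    end
  end.

(* fuel size w suffices, since a and bh are strictly shorter than w *)
Definition wt_perm (w : seq nat) : K := wt_perm_fuel (size w) w.

End Weights.

(* Posets on {1,...,n}, given by a relation le on nat (only its restriction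
   to {1,...,n} matters). *)
Section Posets.
Variables (n : nat) (le : rel nat).

Definition inrange (i : nat) : bool := (1 <= i <= n)%N.

Definition is_poset : Prop :=
  [/\ forall i, inrange i -> le i i,
      forall i j, inrange i -> inrange j -> le i j -> le j i -> i = j &
      forall i j k, inrange i -> inrange j -> inrange k ->
                    le i j -> le j k -> le i k].

Definition ltP (i j : nat) : bool := le i j && (i != j).

Definition covers (j i : nat) : Prop :=
  inrange i /\ inrange j /\ ltP i j /\
  ~ (exists k, inrange k /\ ltP i k /\ ltP k j).

Definition is_forest : Prop :=
  is_poset /\
  forall j i i', inrange j -> covers j i -> covers j i' -> i = i'.

Definition upset (i : nat) : seq nat := [seq j <- iota 1 n | le i j].

Definition rec_labelled : Prop :=
  forall i, inrange i ->
    exists a b : nat, forall j, inrange j -> (le i j <-> (a <= j <= b)%N).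

Definition hgt (i : nat) : nat := size (upset i).
Definition minup (i : nat) : nat := \big[minn/n]_(j <- upset i) j.

Definition linext (w : seq nat) : bool :=
  perm_eq w (iota 1 n) &&
  [forall i : 'I_n.+1, forall j : 'I_n.+1,
     (inrange i && inrange j && ltP i j) ==> (index (i : nat) w < index (j : nat) w)%N].

End Posets.

(* Main.v *)
Require Import Defs.
From mathcomp Require Import all_boot all_order all_algebra.
From mathcomp Require Import mpoly.
From mathcomp Require Import zify ring.
Set Implicit Arguments. Unset Strict Implicit. Unset Printing Implicit Defensive.
Import GRing.Theory.

Local Open Scope ring_scope.

Section Alg.
Variables (K : fieldType) (x : nat -> K) (F : {rmorphism K -> K}).
Hypothesis Fx : forall i, F (x i) = x i.+1.

Lemma iterF0 k : iter k F 0 = 0.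
Proof. by elim: k => //= k ->; rewrite rmorph0. Qed.
Lemma iterF1 k : iter k F 1 = 1.
Proof. by elim: k => //= k ->; rewrite rmorph1. Qed.
Lemma iterFD k a b : iter k F (a + b) = iter k F a + iter k F b.
Proof. by elim: k => //= k ->; rewrite rmorphD. Qed.
Lemma iterFM k a b : iter k F (a * b) = iter k F a * iter k F b.
Proof. by elim: k => //= k ->; rewrite rmorphM. Qed.
Lemma iterFV k a : iter k F (a^-1) = (iter k F a)^-1.
Proof. by elim: k => //= k ->; rewrite fmorphV. Qed.
Lemma iterF_div k a b : iter k F (a / b) = iter k F a / iter k F b.
Proof. by rewrite iterFM iterFV. Qed.
Lemma iterF_sum k I (r : seq I) (P : pred I) (f : I -> K) :
  iter k F (\sum_(i <- r | P i) f i) = \sum_(i <- r | P i) iter k F (f i).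
Proof.
elim/big_rec2: _ => [|i y1 y2 _ <-]; first exact: iterF0.
by rewrite iterFD.
Qed.
Lemma iterF_prod k I (r : seq I) (P : pred I) (f : I -> K) :
  iter k F (\prod_(i <- r | P i) f i) = \prod_(i <- r | P i) iter k F (f i).
Proof.
elim/big_rec2: _ => [|i y1 y2 _ <-]; first exact: iterF1.
by rewrite iterFM.
Qed.
Lemma iterFx k i : iter k F (x i) = x (k + i)%N.
Proof. by elim: k => //= k ->; rewrite Fx. Qed.

Lemma brkE m : brk x m = \sum_(i <- iota 1 m) x i.
Proof. by rewrite /brk /index_iota subn1. Qed.

Lemma iterF_brk c m : iter c F (brk x m) = \sum_(i <- iota c.+1 m) x i.
Proof.
rewrite brkE iterF_sum.
have -> : iota c.+1 m = map (addn c) (iota 1 m) by rewrite -iotaDl addn1.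
by rewrite big_map; apply: eq_bigr => i _; rewrite iterFx.
Qed.

Lemma brk0 : brk x 0 = 0.
Proof. by rewrite brkE big_nil. Qed.

Lemma brk_split k m : brk x k + iter k F (brk x m) = brk x (k + m).
Proof.
by rewrite iterF_brk !brkE iotaD -big_cat add1n.
Qed.

End Alg.

Local Open Scope ring_scope.

Lemma sumx_neq0 (K : fieldType) (x : nat -> K) c m :
  alg_indep x -> (0 < m)%N -> \sum_(i <- iota c.+1 m) x i != 0.
Proof.
move=> ai m0; set M := (c + m).+1.
pose p : {mpoly int[M]} := \sum_(i <- iota c.+1 m) 'X_(inord i).
have := ai M p; rewrite raddf_sum.
have -> : \sum_(i <- iota c.+1 m) mmap intr (fun i : 'I_M => x i) 'X_(inord i) =
          \sum_(i <- iota c.+1 m) x i.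
  rewrite big_seq_cond [RHS]big_seq_cond; apply: eq_bigr => i.
  rewrite andbT mem_iota => /andP[h1 h2].
  by rewrite mmapX mmap1U inordK //; rewrite /M; lia.
apply; apply/eqP => /(congr1 (mcoeff U_(@inord (c+m) c.+1))).
rewrite raddf_sum mcoeff0 (bigD1_seq c.+1) ?iota_uniq //=; last first.
  by rewrite mem_iota; lia.
rewrite mcoeffXU eqxx big1_seq ?addr0 //.
move=> i /andP[ne]; rewrite mem_iota => /andP[h1 h2].
rewrite mcoeffXU; case: eqP => // /(congr1 (@nat_of_ord _)); rewrite !inordK; try (rewrite /M; lia).

Qed.

Local Open Scope ring_scope.

Fixpoint masks (L k : nat) : seq bitseq :=
  match L with
  | 0 => if k is 0 then [:: [::]] else [::]
  | L'.+1 => (if k is k'.+1 then map (cons true) (masks L' k') else [::])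
             ++ map (cons false) (masks L' k)
  end.

Fixpoint mrg (m : bitseq) (a b : seq nat) : seq nat :=
  match m with
  | [::] => [::]
  | true :: m' => if a is u :: a' then u :: mrg m' a' b else [::]
  | false :: m' => if b is v :: b' then v :: mrg m' a b' else [::]
  end.

Lemma masks_gt L k : (L < k)%N -> masks L k = [::].
Proof.
elim: L k => [|L IH] [|k] //= lt; rewrite IH; last by lia.
by rewrite IH //; lia.
Qed.

Lemma mem_masks L k m : m \in masks L k -> size m = L /\ count id m = k.
Proof.
elim: L k m => [|L IH] k m /=.
  by case: k => //; rewrite inE => /eqP ->.
rewrite mem_cat => /orP[|].
  case: k => // k /mapP[m' /IH [h1 h2] ->] /=; split; lia.
by move=> /mapP[m' /IH [h1 h2] ->] /=; split; lia.
Qed.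

Lemma rem_catl (y : nat) A B : y \in A -> rem y (A ++ B) = rem y A ++ B.
Proof.
elim: A => //= a A IH; rewrite inE eq_sym.
by case: eqP => //= _ yA; rewrite IH.
Qed.

Lemma rem_catr (y : nat) A B : y \notin A -> rem y (A ++ B) = A ++ rem y B.
Proof.
elim: A => //= a A IH; rewrite inE negb_or eq_sym => /andP[/negbTE -> /IH ->].
by [].
Qed.

Section Sums.
Variable V : nmodType.

Lemma sum_perms (s : seq nat) (G : seq nat -> V) : uniq s -> (0 < size s)%N ->
  \sum_(w <- permutations s) G w =
  \sum_(y <- s) \sum_(t <- permutations (rem y s)) G (y :: t).
Proof.
move=> us s0; rewrite (perm_big _ (permutationsE s0)) big_allpairs_dep.
by rewrite undup_id.
Qed.

Lemma sum_perms_map (f : nat -> nat) (s : seq nat) (G : seq nat -> V) :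
  injective f -> uniq s ->
  \sum_(w <- permutations (map f s)) G w =
  \sum_(w <- permutations s) G (map f w).
Proof.
move=> fi; move Nn: (size s) => N; elim: N s Nn G => [|N IH] s Nn G us.
  by case: s Nn us => // _ _; rewrite /= !big_seq1.
rewrite sum_perms ?size_map ?Nn ?map_inj_uniq // sum_perms ?Nn // big_map.
rewrite big_seq [RHS]big_seq; apply: eq_bigr => y ys.
have -> : rem (f y) (map f s) = map f (rem y s).
  have remf : forall s', rem (f y) (map f s') = map f (rem y s').
    by elim=> //= z s' IHs; rewrite (inj_eq fi); case: eqP => //= _;
      rewrite IHs.
  exact: remf.
by rewrite (IH (rem y s)) ?rem_uniq //; rewrite size_rem // Nn.
Qed.

Lemma shuffle N (A B : seq nat) (G : seq nat -> V) :
  (size A + size B)%N = N -> uniq (A ++ B) ->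
  \sum_(t <- permutations (A ++ B)) G t =
  \sum_(m <- masks N (size A)) \sum_(a <- permutations A)
     \sum_(b <- permutations B) G (mrg m a b).
Proof.
elim: N A B G => [|N IH] A B G.
  case: A => [|//] ; case: B => [|//] _ _.
  by rewrite /= !big_seq1.
move=> NS uAB; rewrite sum_perms //; last by rewrite size_cat NS.
rewrite big_cat /=.
have uA : uniq A by move: uAB; rewrite cat_uniq => /and3P[].
have uB : uniq B by move: uAB; rewrite cat_uniq => /and3P[].
have dAB : forall y, y \in B -> y \notin A.
  by move: uAB; rewrite cat_uniq => /and3P[_ /hasPn hn _] y yB; apply: hn.
rewrite big_cat /=; congr (_ + _).
- case sA: (size A) => [|k].
    by move/size0nil: sA => ->; rewrite !big_nil.
  rewrite big_map exchange_big sum_perms //; last by rewrite sA.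
  rewrite big_seq [RHS]big_seq; apply: eq_bigr => y yA.
  rewrite rem_catl //.
  have := IH (rem y A) B (fun t => G (y :: t)) _ _; move=> ->.
  + by rewrite size_rem // sA /= exchange_big.
  + by rewrite size_rem // sA; lia.
  + by rewrite -rem_catl // rem_uniq.
- have [B0|BN] := eqVneq B [::].
    rewrite B0 big_nil masks_gt ?big_nil //.
    by rewrite B0 addn0 in NS; lia.
  have sB : (0 < size B)%N by case: (B) BN.
  rewrite big_map.
  have E : forall m a, \sum_(b <- permutations B) G (mrg (false::m) a b) =
     \sum_(y <- B) \sum_(t <- permutations (rem y B)) G (y :: mrg m a t).
    by move=> m a; rewrite sum_perms.
  rewrite (eq_bigr _ (fun m _ => eq_bigr _ (fun a _ => E m a))).
  under [RHS]eq_bigr => m _ do rewrite exchange_big.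
  rewrite [RHS]exchange_big.
  rewrite big_seq [RHS]big_seq; apply: eq_bigr => y yB.
  rewrite rem_catr ?dAB //.
  have := IH A (rem y B) (fun t => G (y :: t)) _ _; move=> ->.
  + by [].
  + by rewrite size_rem //; move: NS sB; case: (size B) => // q; rewrite addnS /=; lia.
  + by rewrite -rem_catr ?dAB // rem_uniq.
Qed.
End Sums.

Local Open Scope ring_scope.

Section Masks.
Variables (K : fieldType) (x : nat -> K) (F : {rmorphism K -> K}).
Hypothesis Fx : forall i, F (x i) = x i.+1.

Definition Num (s : seq nat) : K :=
  \prod_(j < size s) iter (nth 0%N s j).-1 F (brk x j.+1).
Definition pp (L k : nat) : K := \prod_(j < k) iter j F (brk x (L - j)).

Lemma Num_rcons s c : Num (rcons s c) = Num s * iter c.-1 F (brk x (size s).+1).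
Proof.
rewrite /Num size_rcons big_ord_recr /= nth_rcons ltnn eqxx; congr (_ * _).
by apply: eq_bigr => j _; rewrite nth_rcons ltn_ord.
Qed.

Lemma pp_gt L k : (L < k)%N -> pp L k = 0.
Proof.
move=> lt; rewrite /pp (bigD1 (Ordinal lt)) //= subnn brk0 iterF0 mul0r //.
Qed.

Lemma ppS L k : pp L.+1 k.+1 = F (pp L k) * brk x k.+1 + F (pp L k.+1).
Proof.
have E1 : pp L.+1 k.+1 = brk x L.+1 * F (pp L k).
  by rewrite /pp big_ord_recl /= subn0 rmorph_prod; congr (_ * _).
have E2 : F (pp L k.+1) = F (pp L k) * iter k.+1 F (brk x (L - k)).
  by rewrite /pp big_ord_recr /= rmorphM.
rewrite E1 E2 -mulrDr mulrC.
have [le|lt] := leqP k L.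
  rewrite (brk_split Fx); congr (_ * _); congr (brk x _); lia.
by rewrite pp_gt // rmorph0 !mul0r.
Qed.

Lemma sort_mask m c L :
  sort geq (mask m (iota c L)) = rev (mask m (iota c L)).
Proof.
apply: (sorted_eq (leT := geq)).
- by move=> a b d h1 h2; exact: leq_trans h2 h1.
- by move=> a b /andP[h1 h2]; apply/eqP; rewrite eqn_leq; apply/andP; split.
- by apply: sort_sorted => a b; exact: leq_total.
- rewrite rev_sorted; apply: sorted_mask => //.
  + by move=> a b d h1 h2; exact: leq_trans h1 h2.
  + by apply: (@sub_sorted _ ltn); [move=> a b /ltnW|exact: iota_ltn_sorted].
- by rewrite perm_sort perm_sym perm_rev.
Qed.

Lemma sum_masks L k c : (0 < c)%N ->
  \sum_(m <- masks L k) Num (rev (mask m (iota c L))) = iter c.-1 F (pp L k).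
Proof.
elim: L k c => [|L IH] k c c0.
  case: k => [|k]; first by rewrite /= big_seq1 /Num /pp !big_ord0 iterF1.
  by rewrite /= big_nil pp_gt // iterF0.
rewrite /= big_cat /= !big_map.
have Ef : \sum_(j <- masks L k) Num (rev (mask j (iota c.+1 L))) = iter c F (pp L k).
  by rewrite IH.
rewrite Ef.
case: k Ef => [|k] Ef.
  by rewrite big_nil add0r /pp !big_ord0 !iterF1.
rewrite ppS big_map /=.
have -> : \sum_(j <- masks L k) Num (rev (c :: mask j (iota c.+1 L))) =
   iter c F (pp L k) * iter c.-1 F (brk x k.+1).
  rewrite -(IH k c.+1) // mulr_suml big_seq [RHS]big_seq; apply: eq_bigr => m.
  move/mem_masks => [s1 s2].
  rewrite rev_cons Num_rcons size_rev size_mask ?size_iota //.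
  by rewrite s2.
case: (c) c0 => // c' _ /=.
rewrite iterFD iterFM -!iterSr.
by [].
Qed.

Lemma pp_brkfact L k : (k <= L)%N ->
  pp L k * iter k F (brkfact x F (L - k)) = brkfact x F L.
Proof.
move=> le; rewrite /brkfact /pp iterF_prod.
have E : L = (k + (L - k))%N by lia.
rewrite [in RHS]E big_split_ord /=; congr (_ * _).
  by apply: eq_bigr => j _; rewrite -E.
by apply: eq_bigr => j _; rewrite -iterD; congr (iter _ F (brk x _)); lia.
Qed.

Lemma brkfactS n : brkfact x F n.+1 = brk x n.+1 * F (brkfact x F n).
Proof.
by rewrite /brkfact big_ord_recl /= subn0 rmorph_prod; congr (_ * _).
Qed.

Lemma brk_neq0 c m : alg_indep x -> (0 < m)%N -> iter c F (brk x m) != 0.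
Proof. by move=> ai m0; rewrite iterF_brk //; exact: sumx_neq0. Qed.

Lemma brkfact_neq0 k : alg_indep x -> brkfact x F k != 0.
Proof.
move=> ai; rewrite /brkfact; apply/prodf_neq0 => j _; apply: brk_neq0 => //.
by have := ltn_ord j; lia.
Qed.

End Masks.

Local Open Scope ring_scope.

Section Mrg.
Implicit Types (m : bitseq) (a b : seq nat).

Lemma mrg_ind (P : bitseq -> seq nat -> seq nat -> Prop) :
  P [::] [::] [::] ->
  (forall m a b u, P m a b -> P (true :: m) (u :: a) b) ->
  (forall m a b v, P m a b -> P (false :: m) a (v :: b)) ->
  forall m a b, size m = (size a + size b)%N -> count id m = size a -> P m a b.
Proof.
move=> H0 H1 H2; elim=> [|c m IH] a b /=.
  by case: a => //; case: b.
case: c => /=.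
  by case: a => //= u a S C; apply: H1; apply: IH; lia.
move=> S C; case: b S => [|v b] /= S.
  have := count_size id m; lia.
by apply: H2; apply: IH; lia.
Qed.

Lemma mrg_props m a b (p : pred nat) :
  size m = (size a + size b)%N -> count id m = size a ->
  [/\ size (mrg m a b) = size m,
      forall q : pred nat, count q (mrg m a b) = (count q a + count q b)%N &
      (all p a -> all (predC p) b ->
        [/\ filter p (mrg m a b) = a, filter (predC p) (mrg m a b) = b &
            map p (mrg m a b) = m])].
Proof.
move: m a b; apply: mrg_ind => [|m a b u [S Cn H]|m a b v [S Cn H]] /=.
- by split=> // _ _; split.
- split; first by rewrite S.
  + by move=> q; rewrite Cn addnA.
  + move=> /andP[pu pa] pb; have [-> -> ->] := H pa pb; by rewrite pu.
- split; first by rewrite S.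
  + by move=> q; rewrite Cn; lia.
  + move=> pa /andP[pv pb]; have [-> -> ->] := H pa pb.
    by move: pv => /= /negbTE ->.
Qed.

End Mrg.

Lemma pos_mask (w : seq nat) s (p : pred nat) :
  [seq (i + s)%N | i <- iota 0 (size w) & p (nth 0%N w i)] =
  mask (map p w) (iota s (size w)).
Proof.
elim: w s => [|y w IH] s //=.
have E : [seq (i + s)%N | i <- [seq i <- iota 1 (size w) | p (nth 0%N (y :: w) i)]]
   = mask [seq p i | i <- w] (iota s.+1 (size w)).
  rewrite -IH -(addn0 1%N) iotaDl filter_map -map_comp; apply: eq_map => i /=.
  lia.
by case: (p y); rewrite /= E.

Qed.

Section Wt.
Variables (K : fieldType) (x : nat -> K) (F : {rmorphism K -> K}).

Lemma wt_fuel f1 f2 w : 0%N \notin w -> (size w <= f1)%N -> (size w <= f2)%N ->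
  wt_perm_fuel x F f1 w = wt_perm_fuel x F f2 w.
Proof.
elim: f1 f2 w => [|f1 IH] [|f2] [|r t] //= n0 s1 s2.
rewrite inE negb_or eq_sym in n0; case/andP: n0 => r0 t0.
have r0' : (0 < r)%N by rewrite lt0n.
have -> : (r <= r.-1)%N = false by lia.
have -> : (r.-1.+1 < r)%N = false by lia.
have hs : forall q : pred nat, (size (filter q t) <= size t)%N.
  by move=> q; rewrite size_filter count_size.
congr (_ * _ * _).
  apply: IH.
  - by rewrite mem_filter negb_and t0 orbT.
  - by apply: leq_trans (hs _) _; rewrite -ltnS.
  - by apply: leq_trans (hs _) _; rewrite -ltnS.
congr (F (iter _ F _)); apply: IH.
- apply/mapP => -[v]; rewrite mem_filter => /andP[lt _]; lia.
- by rewrite size_map; apply: leq_trans (hs _) _; rewrite -ltnS.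
- by rewrite size_map; apply: leq_trans (hs _) _; rewrite -ltnS.
Qed.

Lemma wt_unfold f w1 w' :
  wt_perm_fuel x F f.+1 (w1 :: w') =
  wt_set x F [seq i.+1 | i <- iota 0 (size (w1 :: w')) & (nth 0%N (w1 :: w') i <= w1.-1)%N]
  * wt_perm_fuel x F f [seq v <- w1 :: w' | (v <= w1.-1)%N]
  * iter w1.-1.+1 F (wt_perm_fuel x F f [seq (v - w1.-1.+1)%N | v <- w1 :: w' & (w1.-1.+1 < v)%N]).
Proof. by []. Qed.

Lemma wt_cons r t : (0 < r)%N -> 0%N \notin t ->
  wt_perm x F (r :: t) =
  wt_set x F (mask (map (fun v => v <= r.-1)%N t) (iota 2 (size t)))
  * wt_perm x F (filter (fun v => v <= r.-1)%N t)
  * iter r F (wt_perm x F (map (subn^~ r) (filter (fun v => r < v)%N t))).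
Proof.
move=> r0 t0; rewrite {1}/wt_perm wt_unfold.
have -> : r.-1.+1 = r by lia.
have E1 : [seq i.+1 | i <- iota 0 (size (r :: t)) & (nth 0%N (r :: t) i <= r.-1)%N]
   = mask (map (fun v => v <= r.-1)%N t) (iota 2 (size t)).
  rewrite -(eq_map (fun i => addn1 i)) (pos_mask (r :: t) 1 (fun v => (v <= r.-1)%N)) /=.
  have -> : (r <= r.-1)%N = false by lia.
  by [].
have hs : forall q : pred nat, (size (filter q t) <= size t)%N.
  by move=> q; rewrite size_filter count_size.
rewrite E1 /=; have -> : (r <= r.-1)%N = false by lia.
have -> : (r < r)%N = false by lia.
congr (_ * _ * iter r F _).
  apply: wt_fuel; last by [].
    by rewrite mem_filter negb_and t0 orbT.
  exact: hs.
apply: wt_fuel => //.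
- apply/mapP => -[v]; rewrite mem_filter => /andP[lt _]; lia.
- by rewrite size_map hs.
Qed.

Lemma wt_merge r m a b : (0 < r)%N ->
  size m = (size a + size b)%N -> count id m = size a ->
  all (fun v => (0 < v <= r.-1)%N) a -> 0%N \notin b ->
  wt_perm x F (r :: mrg m a (map (addn r) b)) =
  wt_set x F (mask m (iota 2 (size m))) * wt_perm x F a * iter r F (wt_perm x F b).
Proof.
move=> r0 S C pa b0.
have S' : size m = (size a + size (map (addn r) b))%N by rewrite size_map.
have [sz _ H1] := mrg_props (fun v => v <= r.-1)%N S' C.
have memt : forall v, (v \in mrg m a (map (addn r) b)) = (v \in a) || (v \in map (addn r) b).
  move=> v; have [_ cq _] := mrg_props (fun v => v <= r.-1)%N S' C.
  by rewrite -!has_pred1 !has_count cq addn_gt0.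
have [fa fb ma] : [/\ filter (fun v => v <= r.-1)%N (mrg m a (map (addn r) b)) = a,
   filter (predC (fun v => v <= r.-1)%N) (mrg m a (map (addn r) b)) = map (addn r) b &
   map (fun v => v <= r.-1)%N (mrg m a (map (addn r) b)) = m].
  apply: H1; first by apply: sub_all pa => v /andP[].
  by apply/allP => v /mapP[u _ ->] /=; lia.
have fb2 : filter (fun v => r < v)%N (mrg m a (map (addn r) b)) = map (addn r) b.
  rewrite -[RHS]fb; apply: eq_in_filter => v; rewrite memt => /orP[va|].
    by move/allP: pa => /(_ v va) /= h; apply/idP/idP; lia.
  move=> /mapP[u ub ->] /=.
  have : u != 0%N by apply: contraNneq b0 => <-.
  by move=> h; apply/idP/idP; lia.
have t0 : 0%N \notin mrg m a (map (addn r) b).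
  rewrite memt negb_or; apply/andP; split.
    by apply/negP => /(allP pa) /=.
  by apply/mapP => -[u _] /esym; lia.
by rewrite wt_cons // ma fa sz fb2 (mapK (addKn r)).
Qed.
End Wt.

Local Close Scope ring_scope.

Section Poset.
Variables (n : nat) (le : rel nat).

Definition Rl : rel nat := fun u v => ~~ Defs.ltP le v u.

Lemma linextE w : perm_eq w (iota 1 n) -> linext n le w = pairwise Rl w.
Proof.
move=> pw; rewrite /linext pw /=.
have uw : uniq w by rewrite (perm_uniq pw) iota_uniq.
have memw : forall v, (v \in w) = inrange n v.
  by move=> v; rewrite (perm_mem pw) mem_iota /inrange; lia.
apply/forallP/(pairwiseP 0%N) => [H p q pw' qw' pq|H i].
  apply/negP => lvu.
  have rv : inrange n (nth 0%N w q) by rewrite -memw mem_nth.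
  have ru : inrange n (nth 0%N w p) by rewrite -memw mem_nth.
  have := H (inord (nth 0%N w q)); move/forallP => /(_ (inord (nth 0%N w p))).
  rewrite !inordK; try (move: rv ru; rewrite /inrange; lia).
  rewrite rv ru lvu /= !index_uniq //.
  lia.
apply/forallP => j; apply/implyP => /andP[/andP[ri rj] lij].
have iw : (i : nat) \in w by rewrite memw.
have jw : (j : nat) \in w by rewrite memw.
rewrite ltnNge leq_eqVlt; apply/negP => /orP[/eqP e|lt].
  have : nth 0%N w (index (j : nat) w) = nth 0%N w (index (i : nat) w) by rewrite e.
  rewrite !nth_index // => eji.
  by move: lij; rewrite /Defs.ltP eji eqxx andbF.
have := H _ _ _ _ lt; rewrite !nth_index // /Rl lij.
by rewrite -!topredE /= !index_mem => /(_ jw iw).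
Qed.

End Poset.

Local Close Scope ring_scope.

Lemma count_le (s : seq nat) (p q : pred nat) :
  (forall v, v \in s -> p v -> q v) -> (count p s <= count q s)%N.
Proof.
elim: s => //= y s IH H.
have Hy := H y (mem_head _ _).
have Hs : forall v, v \in s -> p v -> q v by move=> v vs; apply: H; rewrite inE vs orbT.
apply: leq_add; last exact: IH.
by case: (p y) Hy => //= ->.
Qed.

Lemma count_lt (s : seq nat) (p q : pred nat) :
  (forall v, v \in s -> p v -> q v) -> (exists2 v, v \in s & q v && ~~ p v) ->
  (count p s < count q s)%N.
Proof.
elim: s => [|y s IH] H [v]; first by [].
have Hs : forall v, v \in s -> p v -> q v by move=> w ws; apply: H; rewrite inE ws orbT.
rewrite inE => /orP[/eqP ->|vs] /andP[qv pv] /=.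
  have := count_le Hs; rewrite qv (negbTE pv) /=; lia.
have := IH Hs (ex_intro2 _ _ v vs (introT andP (conj qv pv))).
have Hy := H y (mem_head _ _).
by case: (p y) Hy => [->|] //=; case: (q y) => /=; lia.
Qed.

Section Poset.
Variables (n : nat) (le : rel nat).
Hypothesis Hf : is_forest n le.
Hypothesis Hr : rec_labelled n le.

Definition rootb r := inrange n r && all (fun j => ~~ Defs.ltP le j r) (iota 1 n).

Lemma le_refl i : inrange n i -> le i i.
Proof. by case: Hf => -[h _ _] _; apply: h. Qed.
Lemma le_anti i j : inrange n i -> inrange n j -> le i j -> le j i -> i = j.
Proof. by case: Hf => -[_ h _] _; apply: h. Qed.
Lemma le_trans i j k : inrange n i -> inrange n j -> inrange n k ->
  le i j -> le j k -> le i k.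
Proof. by case: Hf => -[_ _ h] _; apply: h. Qed.

Lemma mem_range i : (i \in iota 1 n) = inrange n i.
Proof. by rewrite mem_iota /inrange; lia. Qed.

Lemma not_below r i : rootb r -> inrange n i -> i != r -> ~~ le i r.
Proof.
case/andP=> _ /allP H ri ir; apply/negP => lir.
by have := H i; rewrite mem_range ri /Defs.ltP lir ir => /(_ isT).
Qed.

Lemma noncross r i j : rootb r -> inrange n i -> i != r -> inrange n j -> le i j ->
  ((i < r) = (j < r))%N /\ j != r.
Proof.
move=> rr ri ir rj lij.
have rR : inrange n r by case/andP: rr.
have nb := not_below rr ri ir.
have [lo [hi H]] := Hr ri.
have hi' := (H i ri).1 (le_refl ri).
have hj := (H j rj).1 lij.
have hr : ~~ (lo <= r <= hi)%N by apply: contra nb => h; apply/(H r rR).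
split.
  by apply/idP/idP; move: hi' hj hr; lia.
by apply/eqP => e; move: hj hr; rewrite e; lia.
Qed.

Definition dn j := count (fun i => Defs.ltP le i j) (iota 1 n).

Lemma dn_lt i j : inrange n i -> inrange n j -> Defs.ltP le i j -> (dn i < dn j)%N.
Proof.
move=> ri rj /andP[lij nij]; apply: count_lt.
  move=> k; rewrite mem_range => rk /andP[lki nki]; apply/andP; split.
    exact: le_trans lki lij.
  apply/eqP => e; move: lki; rewrite e => lji.
  by move/eqP: nij; apply; apply: le_anti.
exists i; first by rewrite mem_range.
by rewrite /= /Defs.ltP lij nij eqxx andbF.
Qed.

Lemma root_exists j : inrange n j -> exists2 r, rootb r & le r j.
Proof.
move: {2}(dn j).+1 (ltnSn (dn j)) => N; elim: N j => [//|N IH] j lt rj.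
case rjb: (rootb j); first by exists j => //; apply: le_refl.
move: rjb; rewrite /rootb rj /= => /negbT; rewrite -has_predC => /hasP[i].
rewrite mem_range => ri /negbNE lij.
have [r rr lri] := IH i (leq_trans (dn_lt ri rj lij) lt) ri.
exists r => //; apply: le_trans lri _ => //.
- by case/andP: rr.
- by case/andP: lij.
Qed.

Lemma cover_exists a j : inrange n a -> inrange n j -> Defs.ltP le a j ->
  exists2 c, covers n le j c & le a c.
Proof.
pose mu a := count (fun k => Defs.ltP le a k && Defs.ltP le k j) (iota 1 n).
move: {2}(mu a).+1 (ltnSn (mu a)) => N; elim: N a => [//|N IH] a lt ra rj laj.
case hk: (has (fun k => Defs.ltP le a k && Defs.ltP le k j) (iota 1 n)).
  move/hasP: hk => [k]; rewrite mem_range => rk /andP[lak lkj].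
  have ltm : (mu k < mu a)%N.
    apply: count_lt.
      move=> k'; rewrite mem_range => rk' /andP[/andP[lkk' nkk'] lk'j].
      rewrite lk'j andbT; case/andP: lak => lak nak; apply/andP; split.
        exact: le_trans lak lkk'.
      apply/eqP => e; move: lkk'; rewrite -e => lka.
      by move/eqP: nak; apply; apply: le_anti.
    exists k; first by rewrite mem_range.
    by rewrite lak lkj /Defs.ltP eqxx andbF.
  have [c cc lkc] := IH k (leq_trans ltm lt) rk rj lkj.
  exists c => //; apply: le_trans lkc => //.
  - by case: cc.
  - by case/andP: lak.
exists a; last exact: le_refl.
split=> //; split=> //; split=> // -[k [rk [lak lkj]]].
by move/negbT: hk => /hasPn /(_ k); rewrite mem_range rk lak lkj => /(_ isT).
Qed.

Lemma chain j : inrange n j -> forall a b, inrange n a -> inrange n b ->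
  le a j -> le b j -> le a b || le b a.
Proof.
move: {2}(dn j).+1 (ltnSn (dn j)) => N; elim: N j => [//|N IH] j lt rj a b ra rb laj lbj.
have [eaj|naj] := eqVneq a j; first by rewrite eaj lbj orbT.
have [ebj|nbj] := eqVneq b j; first by rewrite ebj laj.
have ltaj : Defs.ltP le a j by rewrite /Defs.ltP laj naj.
have ltbj : Defs.ltP le b j by rewrite /Defs.ltP lbj nbj.
have [c cc lac] := cover_exists ra rj ltaj.
have [c' cc' lbc'] := cover_exists rb rj ltbj.
have ec : c = c' by case: Hf => _ H; apply: (H j).
subst c'.
case: cc => rc [_ [lcj _]].
exact: IH c (leq_trans (dn_lt rc rj lcj) lt) rc a b ra rb lac lbc'.
Qed.

Lemma root_unique j r1 r2 : inrange n j -> rootb r1 -> rootb r2 ->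
  le r1 j -> le r2 j -> r1 = r2.
Proof.
move=> rj rr1 rr2 l1 l2.
have ri1 : inrange n r1 by case/andP: rr1.
have ri2 : inrange n r2 by case/andP: rr2.
have [e|ne] := eqVneq r1 r2 => //.
case/orP: (chain rj ri1 ri2 l1 l2) => h.
  by move: (not_below rr2 ri1 ne); rewrite h.
by rewrite eq_sym in ne; move: (not_below rr1 ri2 ne); rewrite h.
Qed.

End Poset.

Local Close Scope ring_scope.

Definition leb (le : rel nat) (r : nat) : rel nat := fun i j => le (r + i)%N (r + j)%N.

Section Restrict.
Variables (n : nat) (le : rel nat).
Hypothesis Hf : is_forest n le.
Hypothesis Hr : rec_labelled n le.
Variable r : nat.
Hypothesis rr : rootb n le r.

Lemma rR : inrange n r. Proof. by case/andP: rr. Qed.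

Lemma forest_a : is_forest r.-1 le /\ rec_labelled r.-1 le.
Proof.
have rR : (1 <= r <= n)%N := rR.
have inr : forall i, inrange r.-1 i -> inrange n i by move=> i; rewrite /inrange; lia.
split; last first.
  move=> i ri; have [lo [hi H]] := Hr (inr i ri).
  by exists lo, hi => j rj; apply: H; apply: inr.
split.
  split.
  - by move=> i /inr; apply: (le_refl Hf).
  - by move=> i j /inr ri /inr rj; apply: (le_anti Hf).
  - by move=> i j k /inr ri /inr rj /inr rk; apply: (le_trans Hf).
have cov : forall j i, covers r.-1 le j i -> covers n le j i.
  move=> j i [ri [rj [lij nk]]]; split; first exact: inr.
  split; first exact: inr.
  split=> // -[k [rk [lik lkj]]]; apply: nk; exists k; split=> //.
  have ir : i != r by apply/eqP => e; move: ri; rewrite e /inrange; lia.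
  have [h1 h2] := noncross Hf Hr rr (inr i ri) ir rk (proj1 (andP lik)).
  move: ri rk h1 h2; rewrite /inrange => ri rk h1 h2.
  by apply/andP; split; [lia|]; apply/idP/idP; first by move: ri; lia.
move=> j i i' rj ci ci'; case: Hf => _ H.
by apply: (H j); [exact: inr | exact: cov | exact: cov].
Qed.

Lemma forest_b : is_forest (n - r) (leb le r) /\ rec_labelled (n - r) (leb le r).
Proof.
have rR : (1 <= r <= n)%N := rR.
have inr : forall i, inrange (n - r) i -> inrange n (r + i) by move=> i; rewrite /inrange; lia.
split; last first.
  move=> i ri; have [lo [hi H]] := Hr (inr i ri).
  exists (lo - r)%N, (hi - r)%N => j rj; rewrite /leb (H _ (inr j rj)).
  by move: rj; rewrite /inrange => rj; split; lia.
split.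
  split.
  - by move=> i /inr; apply: (le_refl Hf).
  - move=> i j /inr ri /inr rj h1 h2; have := le_anti Hf ri rj h1 h2; lia.
  - by move=> i j k /inr ri /inr rj /inr rk; apply: (le_trans Hf).
have cov : forall j i, covers (n - r) (leb le r) j i -> covers n le (r + j) (r + i).
  move=> j i [ri [rj [lij nk]]]; split; first exact: inr.
  split; first exact: inr.
  split.
    by move: lij; rewrite /Defs.ltP /leb eqn_add2l.
  move=> -[k [rk [lik lkj]]]; apply: nk; exists (k - r)%N.
  have ir : (r + i)%N != r by move: ri; rewrite /inrange; lia.
  have [h1 h2] := noncross Hf Hr rr (inr i ri) ir rk (proj1 (andP lik)).
  have ek : (r + (k - r))%N = k.
    move: ri rk h1 h2; rewrite /inrange => ri rk h1 h2.
    have : (r + i < r)%N = false by lia.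
    rewrite h1 => h3; lia.
  split; first by move: rk ek; rewrite /inrange; lia.
  rewrite /Defs.ltP /leb ek; split.
    by move: lik; rewrite /Defs.ltP => /andP[-> h]; rewrite -(eqn_add2l r) ek.
  by move: lkj; rewrite /Defs.ltP => /andP[-> h]; rewrite -(eqn_add2l r) ek.
move=> j i i' rj ci ci'; case: Hf => _ H.
have := H (r + j)%N (r + i)%N (r + i')%N (inr j rj) (cov _ _ ci) (cov _ _ ci').
lia.
Qed.
End Restrict.

Local Close Scope ring_scope.

Lemma filter_interval lo hi s k :
  [seq j <- iota s k | (lo <= j <= hi)%N] =
  iota (maxn lo s) (minn hi.+1 (s + k) - maxn lo s).
Proof.
elim: k s => [|k IH] s.
  by rewrite /= (_ : (minn hi.+1 (s + 0) - maxn lo s = 0)%N) //; lia.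
rewrite /= IH.
case: ifP => h.
  rewrite (_ : (minn hi.+1 (s + k.+1) - maxn lo s = (minn hi.+1 (s.+1 + k) - maxn lo s.+1).+1)%N);
    last by lia.
  by rewrite (_ : maxn lo s = s) /=; [congr (_ :: iota _ _); lia | lia].
have [lt|ge] := ltnP s lo.
  by congr iota; lia.
have -> : (minn hi.+1 (s + k.+1) - s = 0)%N by lia.
by have -> : (minn hi.+1 (s.+1 + k) - maxn lo s.+1 = 0)%N by lia.
Qed.

Lemma bigmin_ge (U : seq nat) c k :
  (k <= c)%N -> (forall j, j \in U -> k <= j)%N -> (k <= \big[minn/c]_(j <- U) j)%N.
Proof.
elim: U => [|y U IH] kc H; first by rewrite big_nil.
rewrite big_cons leq_min H ?mem_head // IH // => j jU.
by apply: H; rewrite inE jU orbT.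
Qed.

Lemma bigmin_iota a h c : (0 < h)%N -> (a <= c)%N -> \big[minn/c]_(j <- iota a h) j = a.
Proof.
case: h => // h _ ac; rewrite /= big_cons.
have : (a <= \big[minn/c]_(j <- iota a.+1 h) j)%N.
  by apply: bigmin_ge => // j; rewrite mem_iota; lia.
lia.
Qed.

Lemma bigmin_idx (U : seq nat) c c' : U != [::] ->
  (forall j, j \in U -> j <= c)%N -> (forall j, j \in U -> j <= c')%N ->
  \big[minn/c]_(j <- U) j = \big[minn/c']_(j <- U) j.
Proof.
elim: U => [//|y U IH] _ H1 H2; rewrite !big_cons.
have [U0|Un] := eqVneq U [::].
  rewrite U0 !big_nil; have := H1 y (mem_head _ _); have := H2 y (mem_head _ _); lia.
rewrite IH // => j jU; [apply: H1|apply: H2]; by rewrite inE jU orbT.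
Qed.

Lemma add_bigmin (U : seq nat) r c :
  (r + \big[minn/c]_(j <- U) j = \big[minn/(r + c)]_(j <- U) (r + j))%N.
Proof. by elim: U => [|y U IH]; rewrite ?big_nil // !big_cons -IH addn_minr. Qed.

Section Up.
Variables (n : nat) (le : rel nat).
Hypothesis Hf : is_forest n le.
Hypothesis Hr : rec_labelled n le.

Lemma upset_iota i : inrange n i -> exists a h,
  [/\ upset n le i = iota a h, (0 < a)%N, (0 < h)%N, minup n le i = a & hgt n le i = h].
Proof.
move=> ri; have [lo [hi H]] := Hr ri.
have E : upset n le i = iota (maxn lo 1) (minn hi.+1 (1 + n) - maxn lo 1).
  rewrite /upset -filter_interval; apply: eq_in_filter => j; rewrite mem_range => rj.
  by apply/idP/idP => /(H j rj).
have hi' := (H i ri).1 (le_refl Hf ri).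
move: ri; rewrite /inrange => ri.
exists (maxn lo 1), (minn hi.+1 (1 + n) - maxn lo 1); split => //; try lia.
- by rewrite /minup E bigmin_iota //; lia.
- by rewrite /hgt E size_iota.
Qed.

Lemma hgt_gt0 i : inrange n i -> (0 < hgt n le i)%N.
Proof. by move=> /upset_iota [a [h [_ _ h0 _ ->]]]. Qed.

Lemma minup_gt0 i : inrange n i -> (0 < minup n le i)%N.
Proof. by move=> /upset_iota [a [h [_ a0 _ -> _]]]. Qed.

End Up.

Section Hooks.
Variables (n : nat) (le : rel nat).
Hypothesis Hf : is_forest n le.
Hypothesis Hr : rec_labelled n le.
Variable r : nat.
Hypothesis rr : rootb n le r.

Lemma upset_a i : inrange r.-1 i -> upset n le i = upset r.-1 le i.
Proof.
move=> ri; have rR : (1 <= r <= n)%N := rR rr.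
have En : n = (r.-1 + (n - r.-1))%N by lia.
rewrite /upset {1}En iotaD filter_cat.
rewrite (_ : [seq j <- iota (1 + r.-1) (n - r.-1) | le i j] = [::]) ?cats0 //.
rewrite -(filter_pred0 (iota (1 + r.-1) (n - r.-1))); apply: eq_in_filter => j.
rewrite mem_iota => hj /=; apply/negP => lij.
have ir : i != r by apply/eqP => e; move: ri; rewrite e /inrange; lia.
have rj : inrange n j by rewrite /inrange; lia.
have ri' : inrange n i by move: ri; rewrite /inrange; lia.
have [h1 h2] := noncross Hf Hr rr ri' ir rj lij.
by move: ri h1 h2; rewrite /inrange => ri h1 h2; move: h1; rewrite (_ : (i < r)%N = true); lia.
Qed.

Lemma hgt_a i : inrange r.-1 i -> hgt n le i = hgt r.-1 le i.
Proof. by move=> ri; rewrite /hgt upset_a. Qed.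

Lemma minup_a i : inrange r.-1 i -> minup n le i = minup r.-1 le i.
Proof.
move=> ri; have rR : (1 <= r <= n)%N := rR rr.
have [Hfa Hra] := forest_a Hf Hr rr.
rewrite /minup upset_a //; apply: bigmin_idx.
- apply/eqP => U0.
  have : i \in upset r.-1 le i by rewrite /upset mem_filter (le_refl Hfa) // mem_range.
  by rewrite U0.
- by move=> j; rewrite mem_filter mem_iota => /andP[_]; lia.
- by move=> j; rewrite mem_filter mem_iota => /andP[_]; lia.
Qed.

Lemma upset_b i : inrange (n - r) i ->
  upset n le (r + i) = map (addn r) (upset (n - r) (leb le r) i).
Proof.
move=> ri; have rR : (1 <= r <= n)%N := rR rr.
have En : n = (r + (n - r))%N by lia.
rewrite /upset {1}En iotaD filter_cat.
rewrite (_ : [seq j <- iota 1 r | le (r + i) j] = [::]) ?cat0s.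
  have -> : (1 + r = r + 1)%N by lia.
  by rewrite (iotaDl r 1) filter_map.
rewrite -(filter_pred0 (iota 1 r)); apply: eq_in_filter => j.
rewrite mem_iota => hj /=; apply/negP => lij.
have ir : (r + i)%N != r by move: ri; rewrite /inrange; lia.
have rj : inrange n j by rewrite /inrange; lia.
have ri' : inrange n (r + i) by move: ri; rewrite /inrange; lia.
have [h1 h2] := noncross Hf Hr rr ri' ir rj lij.
move: h1 h2; rewrite (_ : (r + i < r)%N = false); last by lia.
lia.
Qed.

Lemma hgt_b i : inrange (n - r) i -> hgt n le (r + i) = hgt (n - r) (leb le r) i.
Proof. by move=> ri; rewrite /hgt upset_b // size_map. Qed.

Lemma minup_b i : inrange (n - r) i ->
  minup n le (r + i) = (r + minup (n - r) (leb le r) i)%N.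
Proof.
move=> ri; have rR : (1 <= r <= n)%N := rR rr.
rewrite /minup upset_b // big_map add_bigmin.
by rewrite (_ : (r + (n - r))%N = n) //; lia.
Qed.

End Hooks.

Local Close Scope ring_scope.

Lemma mrg_perm m a b : size m = (size a + size b)%N -> count id m = size a ->
  perm_eq (mrg m a b) (a ++ b).
Proof.
move=> S C; have [_ cq _] := mrg_props pred0 S C.
by apply/permP => q; rewrite cq count_cat.
Qed.

Lemma pairwise_mrg (R : rel nat) m a b :
  size m = (size a + size b)%N -> count id m = size a ->
  (forall u v, u \in a -> v \in b -> R u v && R v u) ->
  pairwise R (mrg m a b) = pairwise R a && pairwise R b.
Proof.
move=> S0 C0 H0; move: S0 C0 H0.
elim: m a b => [|c m IH] a b /= S C H.
  by case: a S C H => //; case: b.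
case: c S C => /= S C.
  case: a S C H => //= u a S C H.
  have S' : size m = (size a + size b)%N by move: S; rewrite addSn => -[].
  have C' : count id m = size a by move: C; rewrite add1n => -[].
  rewrite (perm_all _ (mrg_perm S' C')) all_cat IH //; last first.
    by move=> u' v' u'a v'b; apply: H => //; rewrite inE u'a orbT.
  have -> : all (R u) b.
    by apply/allP => v vb; have /andP[] := H u v (mem_head _ _) vb.
  by rewrite andbT andbA.
case: b S H => [|v b] /= S H.
  by have := count_size id m; lia.
have S' : size m = (size a + size b)%N by move: S; rewrite addnS => -[].
rewrite (perm_all _ (mrg_perm S' C)) all_cat IH //; last first.
  by move=> u' v' u'a v'b; apply: H => //; rewrite inE v'b orbT.
have -> : all (R v) a.
  by apply/allP => u ua; have /andP[] := H u v ua (mem_head _ _).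
by rewrite /=; case: (all (R v) b); case: (pairwise R a); case: (pairwise R b).
Qed.

Section Merge.
Variables (n : nat) (le : rel nat).
Hypothesis Hf : is_forest n le.
Hypothesis Hr : rec_labelled n le.

Lemma iota_split r : (0 < r <= n)%N ->
  iota 1 n = iota 1 r.-1 ++ r :: iota r.+1 (n - r).
Proof.
move=> rn; have En : n = (r.-1 + (n - r).+1)%N by lia.
rewrite {1}En iotaD /=; have -> : (1 + r.-1)%N = r by lia.
by []. Qed.

Lemma linext_merge r m a b : (0 < r <= n)%N ->
  a \in permutations (iota 1 r.-1) -> b \in permutations (iota 1 (n - r)) ->
  m \in masks n.-1 r.-1 ->
  linext n le (r :: mrg m a (map (addn r) b)) =
  [&& rootb n le r, linext r.-1 le a & linext (n - r) (leb le r) b].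
Proof.
move=> rn; rewrite !mem_permutations => pa pb /mem_masks [Sm Cm].
have sa : size a = r.-1 by rewrite (perm_size pa) size_iota.
have sb : size b = (n - r)%N by rewrite (perm_size pb) size_iota.
have S : size m = (size a + size (map (addn r) b))%N by rewrite size_map sa sb; lia.
have C : count id m = size a by rewrite sa.
have pt := mrg_perm S C.
have pw : perm_eq (r :: mrg m a (map (addn r) b)) (iota 1 n).
  rewrite (iota_split rn) perm_sym -cat1s perm_catCA /= perm_cons perm_sym.
  apply: (perm_trans pt); apply: perm_cat => //.
  have -> : iota r.+1 (n - r) = map (addn r) (iota 1 (n - r)) by rewrite -iotaDl addn1.
  by apply: perm_map.
rewrite (linextE le pw) (linextE le pa) (linextE (leb le r) pb) pairwise_cons.
have rR : inrange n r by rewrite /inrange; lia.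
have Eall : all (Rl le r) (mrg m a (map (addn r) b)) = rootb n le r.
  rewrite /rootb rR -(perm_all _ pw) /= {1}/Rl /Defs.ltP eqxx andbF /=.
  by apply: eq_all.
rewrite Eall; case rr: (rootb n le r) => //=.
rewrite pairwise_mrg //.
  congr (_ && _); rewrite pairwise_map; apply: eq_pairwise => u v.
  by rewrite /= /Rl /Defs.ltP /leb eqn_add2l.
move=> u v; rewrite (perm_mem pa) mem_iota => hu /mapP[j].
rewrite (perm_mem pb) mem_iota => hj ->.
have ru : inrange n u by rewrite /inrange; lia.
have rv : inrange n (r + j) by rewrite /inrange; lia.
have ur : u != r by lia.
have vr : (r + j)%N != r by lia.
apply/andP; split; apply/negP => /andP[lt _].
  have [h1 _] := noncross Hf Hr rr rv vr ru lt; move: h1; lia.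
have [h1 _] := noncross Hf Hr rr ru ur rv lt; move: h1; lia.
Qed.

End Merge.

Local Open Scope ring_scope.

Section Main.
Variables (K : fieldType) (x : nat -> K) (F : {rmorphism K -> K}).
Hypothesis Fx : forall i, F (x i) = x i.+1.
Hypothesis ai : alg_indep x.

Definition hook n le i := iter (minup n le i).-1 F (brk x (hgt n le i)).
Definition HP n le := \prod_(i <- iota 1 n) hook n le i.

Lemma hook_neq0 n le i : is_forest n le -> rec_labelled n le -> inrange n i ->
  hook n le i != 0.
Proof. by move=> Hf Hr ri; apply: brk_neq0 => //; apply: (hgt_gt0 Hf Hr). Qed.

Lemma HP_neq0 n le : is_forest n le -> rec_labelled n le -> HP n le != 0.
Proof.
move=> Hf Hr; rewrite /HP prodf_seq_neq0; apply/allP => i; rewrite mem_range => ri.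
by apply/implyP => _; apply: hook_neq0.
Qed.

Lemma hook_sum n le i : is_forest n le -> rec_labelled n le -> inrange n i ->
  hook n le i = \sum_(j <- iota 1 n | le i j) x j.
Proof.
move=> Hf Hr ri; have [a [h [U a0 h0 M Hg]]] := upset_iota Hf Hr ri.
rewrite /hook M Hg iterF_brk // (_ : a.-1.+1 = a); last by lia.
by rewrite -U /upset big_filter.
Qed.

Lemma partition n le : is_forest n le -> rec_labelled n le ->
  \sum_(r <- iota 1 n | rootb n le r) hook n le r = brk x n.
Proof.
move=> Hf Hr.
rewrite big_seq_cond (eq_bigr (fun r => \sum_(j <- iota 1 n | le r j) x j)); last first.
  by move=> r /andP[]; rewrite mem_range => ri _; apply: hook_sum.
rewrite -big_seq_cond (exchange_big_dep predT) //= brkE.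
rewrite big_seq [RHS]big_seq; apply: eq_bigr => j; rewrite mem_range => rj.
have [r0 rr0 l0] := root_exists Hf rj.
rewrite big_const_seq.
have -> : count (fun r => rootb n le r && le r j) (iota 1 n) = 1%N.
  rewrite (@eq_in_count _ _ (pred1 r0)); last first.
    move=> r; rewrite mem_range => rr /=; apply/idP/eqP.
      by case/andP=> h1 h2; apply: (root_unique Hf rj h1 rr0 h2 l0).
    by move=> ->; rewrite rr0 l0.
  have ri0 : inrange n r0 by case/andP: rr0.
  by rewrite count_uniq_mem ?iota_uniq // mem_range ri0.
by rewrite /= addr0.
Qed.

Lemma HP_split n le r : is_forest n le -> rec_labelled n le -> rootb n le r ->
  HP n le = HP r.-1 le * hook n le r * iter r F (HP (n - r) (leb le r)).
Proof.
move=> Hf Hr rr; have rR : (0 < r <= n)%N by have := rR rr; rewrite /inrange.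
have [Hfb Hrb] := forest_b Hf Hr rr.
rewrite /HP (iota_split rR) big_cat /= big_cons mulrA; congr (_ * _ * _).
  rewrite big_seq [RHS]big_seq; apply: eq_bigr => i; rewrite mem_iota => hi.
  have ri : inrange r.-1 i by rewrite /inrange; lia.
  by rewrite /hook (minup_a Hf Hr rr ri) (hgt_a Hf Hr rr ri).
have -> : iota r.+1 (n - r) = map (addn r) (iota 1 (n - r)) by rewrite -iotaDl addn1.
rewrite big_map iterF_prod big_seq [RHS]big_seq; apply: eq_bigr => i; rewrite mem_range => ri.
rewrite /hook (minup_b Hf Hr rr ri) (hgt_b Hf Hr rr ri).
have := minup_gt0 Hfb Hrb ri => mg.
by rewrite (_ : (r + minup (n - r) (leb le r) i).-1 = r + (minup (n - r) (leb le r) i).-1)%N ?iterD //; lia.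
Qed.

Lemma sum3 I J L (s1 : seq I) (s2 : seq J) (s3 : seq L) (c : K)
    (X : I -> K) (Y : J -> K) (Z : L -> K) :
  \sum_(i <- s1) \sum_(j <- s2) \sum_(k <- s3) (c * X i * Y j * Z k) =
  c * (\sum_(i <- s1) X i) * (\sum_(j <- s2) Y j) * (\sum_(k <- s3) Z k).
Proof.
transitivity ((\sum_(i <- s1) \sum_(j <- s2) (c * X i * Y j)) * \sum_(k <- s3) Z k).
  rewrite mulr_suml; apply: eq_bigr => i _; rewrite mulr_suml; apply: eq_bigr => j _.
  by rewrite mulr_sumr.
congr (_ * _).
transitivity ((\sum_(i <- s1) (c * X i)) * \sum_(j <- s2) Y j).
  by rewrite mulr_suml; apply: eq_bigr => i _; rewrite mulr_sumr.
by rewrite -mulr_sumr.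
Qed.

Definition LP n le :=
  \sum_(w <- permutations (iota 1 n) | linext n le w) wt_perm x F w.

Lemma LP_rec n le : is_forest n le -> rec_labelled n le -> (0 < n)%N ->
  LP n le = \sum_(r <- iota 1 n | rootb n le r)
      (F (pp x F n.-1 r.-1) / brkfact x F r.-1) * LP r.-1 le * iter r F (LP (n - r) (leb le r)).
Proof.
move=> Hf Hr n0.
rewrite /LP big_mkcond sum_perms ?iota_uniq ?size_iota //.
rewrite [RHS]big_mkcond big_seq [RHS]big_seq; apply: eq_bigr => r; rewrite mem_range => rR.
have rn : (0 < r <= n)%N by move: rR; rewrite /inrange.
have Erem : rem r (iota 1 n) = iota 1 r.-1 ++ map (addn r) (iota 1 (n - r)).
  rewrite (iota_split rn) rem_catr; last by rewrite mem_iota; lia.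
  by rewrite /= eqxx -iotaDl addn1.
have ur : uniq (iota 1 r.-1 ++ map (addn r) (iota 1 (n - r))) by rewrite -Erem rem_uniq ?iota_uniq.
rewrite Erem (shuffle (N := n.-1)) //; last by rewrite size_map !size_iota; lia.
rewrite size_iota.
have E1 : forall m a,
  \sum_(b <- permutations (map (addn r) (iota 1 (n - r))))
     (if linext n le (r :: mrg m a b) then wt_perm x F (r :: mrg m a b) else 0) =
  \sum_(b <- permutations (iota 1 (n - r)))
     (if linext n le (r :: mrg m a (map (addn r) b))
      then wt_perm x F (r :: mrg m a (map (addn r) b)) else 0).
  move=> m a.
  rewrite (sum_perms_map (fun b => if linext n le (r :: mrg m a b)
     then wt_perm x F (r :: mrg m a b) else 0)) ?iota_uniq //.
  exact: addnI.
rewrite (eq_bigr _ (fun m _ => eq_bigr _ (fun a _ => E1 m a))).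
pose ws m := wt_set x F (mask m (iota 2 n.-1)).
pose Y a := if linext r.-1 le a then wt_perm x F a else 0.
pose Z b := if linext (n - r) (leb le r) b then wt_perm x F b else 0.
pose c : K := if rootb n le r then 1 else 0.
have E2 : forall m a b, m \in masks n.-1 r.-1 -> a \in permutations (iota 1 r.-1) ->
    b \in permutations (iota 1 (n - r)) ->
    (if linext n le (r :: mrg m a (map (addn r) b))
      then wt_perm x F (r :: mrg m a (map (addn r) b)) else 0) =
    c * ws m * Y a * iter r F (Z b).
  move=> m a b mm ma mb.
  rewrite (linext_merge Hf Hr rn ma mb mm).
  have [Sm Cm] := mem_masks mm.
  move: (ma) (mb); rewrite !mem_permutations => pa pb.
  have sa : size a = r.-1 by rewrite (perm_size pa) size_iota.
  have sb : size b = (n - r)%N by rewrite (perm_size pb) size_iota.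
  rewrite wt_merge //; first last.
  - by rewrite (perm_mem pb) mem_iota.
  - by apply/allP => v; rewrite (perm_mem pa) mem_iota; lia.
  - by rewrite sa.
  - by rewrite sa sb Sm; lia.
  - by lia.
  rewrite /c /ws /Y /Z Sm.
  case: (rootb n le r); case: (linext r.-1 le a); case: (linext (n - r) (leb le r) b);
    by rewrite /= ?iterF0 ?mul1r ?mulr0 ?mul0r.
transitivity (\sum_(m <- masks n.-1 r.-1) \sum_(a <- permutations (iota 1 r.-1))
    \sum_(b <- permutations (iota 1 (n - r))) (c * ws m * Y a * iter r F (Z b))).
  rewrite big_seq [RHS]big_seq; apply: eq_bigr => m mm.
  rewrite big_seq [RHS]big_seq; apply: eq_bigr => a ma.
  rewrite big_seq [RHS]big_seq; apply: eq_bigr => b mb.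
  exact: E2.
rewrite sum3 -iterF_sum -!big_mkcond /=.
have -> : \sum_(m <- masks n.-1 r.-1) ws m = F (pp x F n.-1 r.-1) / brkfact x F r.-1.
  rewrite (_ : F (pp x F n.-1 r.-1) = iter 2.-1 F (pp x F n.-1 r.-1)) //.
  rewrite -(sum_masks Fx _ _ (isT : (0 < 2)%N)) mulr_suml big_seq [RHS]big_seq.
  apply: eq_bigr => m /mem_masks [Sm Cm].
  by rewrite /ws /wt_set /Num /= sort_mask size_rev size_mask ?size_iota ?Sm // Cm.
by rewrite /c; case: (rootb n le r); rewrite ?mul1r ?mul0r.
Qed.

Lemma iterF_neq0 k (y : K) : y != 0 -> iter k F y != 0.
Proof. by elim: k => //= k IH y0; rewrite fmorph_eq0 IH. Qed.

Lemma alg_step (A B C D E h : K) : B != 0 -> C != 0 -> E != 0 -> h != 0 ->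
  A / B * (B / C) * (D / E) = (A * D) / (C * h * E) * h.
Proof. by move=> B0 C0 E0 h0; field; rewrite ?B0 ?C0 ?E0 ?h0 ?mulf_neq0. Qed.

Lemma LP0 le : LP 0 le = brkfact x F 0 / HP 0 le.
Proof.
rewrite /LP /HP /brkfact /= big_ord0 big_nil divr1 big_cons big_nil.
have -> : linext 0 le [::] = true.
  rewrite /linext /=; apply/forallP => i; apply/forallP => j.
  by rewrite /inrange; case: (val i) => [|k] //=; rewrite ltn0 andbF.
by rewrite addr0.
Qed.

Lemma main N : forall n le, (n <= N)%N -> is_forest n le -> rec_labelled n le ->
  LP n le = brkfact x F n / HP n le.
Proof.
elim: N => [|N IH] n le nN Hf Hr.
  by move: nN; rewrite leqn0 => /eqP ->; apply: LP0.
case: n nN Hf Hr => [|n] nN Hf Hr; first exact: LP0.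
rewrite LP_rec //.
have Ht : forall r, r \in iota 1 n.+1 -> rootb n.+1 le r ->
    F (pp x F n r.-1) / brkfact x F r.-1 * LP r.-1 le * iter r F (LP (n.+1 - r) (leb le r))
    = F (brkfact x F n) / HP n.+1 le * hook n.+1 le r.
  move=> r _ rr.
  have rn : (0 < r <= n.+1)%N by have := rR rr; rewrite /inrange.
  have [Hfa Hra] := forest_a Hf Hr rr.
  have [Hfb Hrb] := forest_b Hf Hr rr.
  rewrite (IH r.-1) //; last by lia.
  rewrite (IH (n.+1 - r)%N) //; last by lia.
  rewrite iterF_div (@alg_step _ _ _ _ _ (hook n.+1 le r) (brkfact_neq0 _ _ ai) (HP_neq0 Hfa Hra)).
  - rewrite -(HP_split Hf Hr rr); congr (_ / _ * _).
    rewrite (_ : r = r.-1.+1) ?iterS; last by lia.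
    rewrite -rmorphM (_ : (n.+1 - r.-1.+1)%N = (n - r.-1)%N); last by lia.
    by rewrite pp_brkfact //; lia.
  - exact: Fx.
  - by apply: iterF_neq0; apply: HP_neq0.
  - by apply: hook_neq0 => //; apply: rR.
rewrite big_seq_cond (eq_bigr _ (fun r h => Ht r (proj1 (andP h)) (proj2 (andP h)))).
rewrite -big_seq_cond -mulr_sumr partition // brkfactS.
by rewrite mulrC mulrA.
Qed.

End Main.

Local Open Scope ring_scope.

Theorem theorem1p1 (K : fieldType) (x : nat -> K) (F : {rmorphism K -> K})
    (n : nat) (le : rel nat) :
  alg_indep x ->
  (forall i, F (x i) = x i.+1) ->
  is_forest n le -> rec_labelled n le ->
  \sum_(w <- permutations (iota 1 n) | linext n le w) wt_perm x F w
  = brkfact x F n /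
    \prod_(i <- iota 1 n) iter (minup n le i).-1 F (brk x (hgt n le i)).
Proof.
move=> ai Fx Hf Hr.
exact: (main Fx ai (leqnn n) Hf Hr).
Qed.
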